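(* Every constantizable complete theory is strongly minimal.
   Context: A $T$-formula $\varphi(\overline{x})$ is constantizable if $T$ has an expansion $T'$ (a complete theory $T'\supseteq T$ in a larger language) such that $\varphi(\overline{x})$ is $T'$-equivalent to a Boolean combination of formulas of the forms $x\approx y$ and $x\approx c$, with variables $x,y$ and constant symbols $c$. A theory $T$ is constantizable if every $T$-formula is constantizable. $T$ is strongly minimal if for every formula $\varphi(x,\bar a)$ with parameters $\bar a$ from a model of $T$, either $\varphi(x,\bar a)$ or $\neg\varphi(x,\bar a)$ has finitely many solutions. *)

(* Defs.v *)
From Stdlib Require Import List Arith Fin.



Record lang := Lang {
  Fn : Type;                 (* function symbols (constants = arity 0) *)
  Rl : Type;
  far : Fn -> nat;
  rar : Rl -> nat
}.

Inductive term (L : lang) : Type :=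
| tvar : nat -> term L
| tapp : forall f : Fn L, (Fin.t (far L f) -> term L) -> term L.

Inductive form (L : lang) : Type :=
| ffal : form L
| feq  : term L -> term L -> form L
| frel : forall r : Rl L, (Fin.t (rar L r) -> term L) -> form L
| fneg : form L -> form L
| fand : form L -> form L -> form L
| fex  : nat -> form L -> form L.

Arguments tvar {L}.
Arguments ffal {L}.
Arguments tapp {L}.
Arguments feq {L}.
Arguments frel {L}.
Arguments fneg {L}.
Arguments fand {L}.
Arguments fex {L}.

Fixpoint tfree {L : lang} (x : nat) (t : term L) : Prop :=
  match t with
  | tvar y => y = x
  | tapp f a => exists i, tfree x (a i)
  end.

Fixpoint ffree {L : lang} (x : nat) (p : form L) : Prop :=
  match p with
  | ffal => False
  | feq t1 t2 => tfree x t1 \/ tfree x t2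
  | frel r a => exists i, tfree x (a i)
  | fneg q => ffree x q
  | fand q1 q2 => ffree x q1 \/ ffree x q2
  | fex y q => y <> x /\ ffree x q
  end.

Definition sentence {L : lang} (p : form L) : Prop := forall x, ~ ffree x p.

Record structure (L : lang) := Struct {
  dom :> Type;
  fint : forall f : Fn L, (Fin.t (far L f) -> dom) -> dom;
  rint : forall r : Rl L, (Fin.t (rar L r) -> dom) -> Prop
}.
Arguments fint {L}.
Arguments rint {L}.

Definition update {A : Type} (v : nat -> A) (x : nat) (a : A) : nat -> A :=
  fun y => if Nat.eqb y x then a else v y.

Fixpoint teval {L : lang} (M : structure L) (v : nat -> M) (t : term L) : M :=
  match t with
  | tvar x => v x
  | tapp f a => fint M f (fun i => teval M v (a i))
  end.

Fixpoint sat {L : lang} (M : structure L) (v : nat -> M) (p : form L) : Prop :=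
  match p with
  | ffal => False
  | feq t1 t2 => teval M v t1 = teval M v t2
  | frel r a => rint M r (fun i => teval M v (a i))
  | fneg q => ~ sat M v q
  | fand q1 q2 => sat M v q1 /\ sat M v q2
  | fex x q => exists a : M, sat M (update v x a) q
  end.

Definition theory (L : lang) := form L -> Prop.

Definition is_model {L : lang} (M : structure L) (T : theory L) : Prop :=
  inhabited M /\ forall p, T p -> forall v : nat -> M, sat M v p.

Definition entails {L : lang} (T : theory L) (p : form L) : Prop :=
  forall M : structure L, is_model M T -> forall v : nat -> M, sat M v p.

Definition complete_theory {L : lang} (T : theory L) : Prop :=
  (forall p, T p -> sentence p) /\
  (exists M : structure L, is_model M T) /\
  (forall p, sentence p -> entails T p -> T p) /\
  (forall p, sentence p -> T p \/ T (fneg p)).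

(** The larger language L' ⊇ L obtained by adding new function symbols
    [F] (arities [af]) and new relation symbols [R] (arities [ar]).
    Every language containing L is of this form up to renaming. *)
Definition ext (L : lang) (F R : Type) (af : F -> nat) (ar : R -> nat) : lang :=
  {| Fn := (Fn L + F)%type;
     Rl := (Rl L + R)%type;
     far := fun s => match s with inl f => far L f | inr g => af g end;
     rar := fun s => match s with inl r => rar L r | inr g => ar g end |}.

Section Translate.
Variables (L : lang) (F R : Type) (af : F -> nat) (ar : R -> nat).
Local Notation L' := (ext L F R af ar).

Fixpoint tr_term (t : term L) : term L' :=
  match t with
  | tvar x => tvar x
  | tapp f a => @tapp L' (inl f) (fun i => tr_term (a i))
  end.

Fixpoint tr_form (p : form L) : form L' :=
  match p with
  | ffal => ffal
  | feq t1 t2 => feq (tr_term t1) (tr_term t2)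
  | frel r a => @frel L' (inl r) (fun i => tr_term (a i))
  | fneg q => fneg (tr_form q)
  | fand q1 q2 => fand (tr_form q1) (tr_form q2)
  | fex x q => fex x (tr_form q)
  end.
End Translate.

Inductive boolcomb {L : lang} : form L -> Prop :=
| bc_fal : boolcomb ffal
| bc_vv : forall x y : nat, boolcomb (feq (tvar x) (tvar y))
| bc_vc : forall (x : nat) (c : Fn L) (a : Fin.t (far L c) -> term L),
    far L c = 0 -> boolcomb (feq (tvar x) (tapp c a))
| bc_neg : forall p, boolcomb p -> boolcomb (fneg p)
| bc_and : forall p q, boolcomb p -> boolcomb q -> boolcomb (fand p q).

Definition constantizable {L : lang} (T : theory L) (p : form L) : Prop :=
  exists (F R : Type) (af : F -> nat) (ar : R -> nat)
         (T' : theory (ext L F R af ar)),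
    complete_theory T' /\
    (forall s, T s -> T' (tr_form L F R af ar s)) /\
    exists psi : form (ext L F R af ar),
      boolcomb psi /\
      (forall x, ffree x psi -> ffree x p) /\
      (forall M : structure (ext L F R af ar), is_model M T' ->
         forall v : nat -> M, sat M v (tr_form L F R af ar p) <-> sat M v psi).

Definition constantizable_theory {L : lang} (T : theory L) : Prop :=
  forall p : form L, constantizable T p.

Definition finite_set {A : Type} (P : A -> Prop) : Prop :=
  exists l : list A, forall a, P a -> In a l.

(** For every model M, formula φ(x, ȳ) and parameters (given by the
    assignment v to the variables other than x), either φ(M, ā) or its
    complement is finite. *)
Definition strongly_minimal {L : lang} (T : theory L) : Prop :=
  forall M : structure L, is_model M T ->
  forall (p : form L) (x : nat) (v : nat -> M),
    finite_set (fun a : M => sat M (update v x a) p) \/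
    finite_set (fun a : M => ~ sat M (update v x a) p).

(* Main.v *)
Require Import Defs.
From Stdlib Require Import List Arith Lia Bool Classical FunctionalExtensionality.
Import ListNotations.

Lemma teval_coinc {L : lang} (M : structure L) (t : term L) (v1 v2 : nat -> M) :
  (forall y, tfree y t -> v1 y = v2 y) -> teval M v1 t = teval M v2 t.
Proof.
  induction t as [n|f a IH]; simpl; intros H.
  - apply H; reflexivity.
  - f_equal; apply functional_extensionality; intro i; apply IH.
    intros y Hy; apply H; exists i; auto.
Qed.

Lemma sat_coinc {L : lang} (M : structure L) (p : form L) : forall v1 v2 : nat -> M,
  (forall y, ffree y p -> v1 y = v2 y) -> (sat M v1 p <-> sat M v2 p).
Proof.
  induction p as [| t1 t2 | r a | q IH | q1 IH1 q2 IH2 | n q IH]; simpl; intros v1 v2 H.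
  - tauto.
  - rewrite (teval_coinc M t1 v1 v2), (teval_coinc M t2 v1 v2); [tauto| |];
      intros; apply H; auto.
  - replace (fun i => teval M v1 (a i)) with (fun i => teval M v2 (a i)); [tauto|].
    apply functional_extensionality; intro i; symmetry; apply teval_coinc.
    intros y Hy; apply H; exists i; auto.
  - rewrite (IH v1 v2); tauto.
  - rewrite (IH1 v1 v2), (IH2 v1 v2); try tauto; intros; apply H; auto.
  - assert (Hu : forall a, sat M (update v1 n a) q <-> sat M (update v2 n a) q).
    { intro a; apply IH; intros y Hy; unfold update; destruct (Nat.eqb_spec y n); auto. }
    split; intros [a Ha]; exists a; apply Hu; auto.
Qed.

Lemma fin_bound (n : nat) (P : Fin.t n -> nat -> Prop) :
  (forall i N N', N <= N' -> P i N -> P i N') ->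
  (forall i, exists N, P i N) -> exists N, forall i, P i N.
Proof.
  induction n as [|n IH]; intros Hm Hex.
  - exists 0; intro i; inversion i.
  - destruct (Hex Fin.F1) as [N0 H0].
    destruct (IH (fun i => P (Fin.FS i))) as [N1 H1].
    + intros; eapply Hm; eauto.
    + intros; apply Hex.
    + exists (max N0 N1); intro i; pattern i; apply Fin.caseS'.
      * eapply Hm; [|exact H0]; lia.
      * intro j; eapply Hm; [|apply H1]; lia.
Qed.

Lemma tbound {L : lang} (t : term L) : exists N, forall y, tfree y t -> y < N.
Proof.
  induction t as [n|f a IH]; simpl.
  - exists (S n); intros; lia.
  - destruct (fin_bound _ (fun i N => forall y, tfree y (a i) -> y < N)) as [N HN].
    + intros i N N' HNN H y Hy; specialize (H y Hy); lia.
    + exact IH.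
    + exists N; intros y [i Hi]; eapply HN; eauto.
Qed.

Lemma fbound {L : lang} (p : form L) : exists N, forall y, ffree y p -> y < N.
Proof.
  induction p as [| t1 t2 | r a | q IH | q1 IH1 q2 IH2 | n q IH]; simpl.
  - exists 0; tauto.
  - destruct (tbound t1) as [N1 H1]; destruct (tbound t2) as [N2 H2].
    exists (N1 + N2); intros y [Hy|Hy]; [specialize (H1 y Hy)|specialize (H2 y Hy)]; lia.
  - destruct (fin_bound _ (fun i N => forall y, tfree y (a i) -> y < N)) as [N HN].
    + intros i N N' HNN H y Hy; specialize (H y Hy); lia.
    + intro i; apply tbound.
    + exists N; intros y [i Hi]; eapply HN; eauto.
  - exact IH.
  - destruct IH1 as [N1 H1]; destruct IH2 as [N2 H2].
    exists (N1 + N2); intros y [Hy|Hy]; [specialize (H1 y Hy)|specialize (H2 y Hy)]; lia.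
  - destruct IH as [N HN]; exists N; intros y [_ Hy]; auto.
Qed.

Definition fall {L : lang} (z : nat) (q : form L) : form L := fneg (fex z (fneg q)).
Definition fimp {L : lang} (a b : form L) : form L := fneg (fand a (fneg b)).
Definition f_or {L : lang} (a b : form L) : form L := fneg (fand (fneg a) (fneg b)).

Fixpoint Dj {L : lang} (x N k : nat) : form L :=
  match k with 0 => ffal | S j => f_or (Dj x N j) (feq (tvar x) (tvar (N + j))) end.
Fixpoint Ek {L : lang} (N k : nat) (q : form L) : form L :=
  match k with 0 => q | S j => Ek N j (fex (N + j) q) end.
Definition small {L : lang} (x N k : nat) (q : form L) : form L :=
  Ek N k (fall x (fimp q (Dj x N k))).
Fixpoint closeN {L : lang} (n : nat) (q : form L) : form L :=
  match n with 0 => q | S m => fall m (closeN m q) end.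

Definition ov {A : Type} (u : nat -> A) (N k : nat) (f : nat -> A) : nat -> A :=
  fun y => if (N <=? y) && (y <? N + k) then f (y - N) else u y.

Lemma sat_or {L : lang} (M : structure L) u (a b : form L) :
  sat M u (f_or a b) <-> sat M u a \/ sat M u b.
Proof. simpl; split; intros H; [destruct (classic (sat M u a)); tauto| tauto]. Qed.

Lemma sat_D {L : lang} (M : structure L) u x N k :
  sat M u (@Dj L x N k) <-> exists j, j < k /\ u x = u (N + j).
Proof.
  induction k as [|k IH].
  - simpl; split; [tauto| intros [j [Hj _]]; lia].
  - change (@Dj L x N (S k)) with (f_or (@Dj L x N k) (@feq L (tvar x) (tvar (N + k)))).
    rewrite sat_or, IH; simpl; split.
    + intros [[j [Hj E]]|E]; [exists j; split; auto; lia| exists k; auto].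
    + intros [j [Hj E]]; destruct (Nat.eq_dec j k); [subst; auto| left; exists j; split; auto; lia].
Qed.

Lemma ov_S {A : Type} (u : nat -> A) N j f :
  ov u N (S j) f = update (ov u N j f) (N + j) (f j).
Proof.
  apply functional_extensionality; intro y; unfold ov, update.
  destruct (Nat.eqb_spec y (N + j)).
  - subst; replace (N + j - N) with j by lia.
    destruct (Nat.leb_spec N (N + j)); destruct (Nat.ltb_spec (N + j) (N + S j)); simpl; auto; lia.
  - destruct (Nat.leb_spec N y); destruct (Nat.ltb_spec y (N + S j));
      destruct (Nat.ltb_spec y (N + j)); simpl; auto; lia.
Qed.

Lemma ov_ext {A : Type} (u : nat -> A) N j f g :
  (forall i, i < j -> f i = g i) -> ov u N j f = ov u N j g.
Proof.
  intro H; apply functional_extensionality; intro y; unfold ov.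
  destruct (Nat.leb_spec N y); destruct (Nat.ltb_spec y (N + j)); simpl; auto.
  apply H; lia.
Qed.

Lemma sat_E {L : lang} (M : structure L) N k : forall (q : form L) u,
  sat M u (Ek N k q) <-> exists f, sat M (ov u N k f) q.
Proof.
  induction k as [|k IH]; intros q u; simpl.
  - split.
    + intro H; exists (fun _ => u 0).
      replace (ov u N 0 (fun _ => u 0)) with u; auto.
      apply functional_extensionality; intro y; unfold ov.
      destruct (Nat.leb_spec N y); destruct (Nat.ltb_spec y (N + 0)); simpl; auto; lia.
    + intros [f Hf].
      replace u with (ov u N 0 f); auto.
      apply functional_extensionality; intro y; unfold ov.
      destruct (Nat.leb_spec N y); destruct (Nat.ltb_spec y (N + 0)); simpl; auto; lia.
  - rewrite IH; simpl; split.
    + intros [f [a Ha]].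
      exists (fun i => if Nat.eqb i k then a else f i).
      rewrite ov_S, Nat.eqb_refl.
      rewrite (ov_ext u N k (fun i => if Nat.eqb i k then a else f i) f); auto.
      intros i Hi; destruct (Nat.eqb_spec i k); auto; lia.
    + intros [f Hf]; exists f, (f k); rewrite <- ov_S; auto.
Qed.

Lemma small_elim {L : lang} (M : structure L) x N K (q : form L) u :
  x < N -> sat M u (small x N K q) ->
  exists f, forall a, sat M (update (ov u N K f) x a) q -> exists j, j < K /\ a = f j.
Proof.
  intros Hx H; unfold small in H; rewrite sat_E in H; destruct H as [f Hf].
  exists f; intros a Ha; simpl in Hf.
  assert (Hd : sat M (update (ov u N K f) x a) (@Dj L x N K)).
  { apply NNPP; intro Hn; apply Hf; exists a; intro Hnn; apply Hnn; split; [exact Ha| exact Hn]. }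
  rewrite sat_D in Hd; destruct Hd as [j [Hj E]]; exists j; split; auto.
  unfold update, ov in E; rewrite Nat.eqb_refl in E.
  destruct (Nat.eqb_spec (N + j) x); [lia|].
  destruct (Nat.leb_spec N (N + j)); destruct (Nat.ltb_spec (N + j) (N + K)); simpl in E; try lia.
  rewrite E; f_equal; lia.
Qed.

Lemma small_intro {L : lang} (M : structure L) x N K (q : form L) u (f : nat -> M) :
  x < N ->
  (forall a, sat M (update (ov u N K f) x a) q -> exists j, j < K /\ a = f j) ->
  sat M u (small x N K q).
Proof.
  intros Hx H; unfold small; rewrite sat_E; exists f; simpl.
  intros [a Ha]; apply Ha; intros [H1 H2]; apply H2.
  fold (@sat L M); apply sat_D; destruct (H a H1) as [j [Hj E]]; exists j; split; auto.
  unfold update, ov; rewrite Nat.eqb_refl.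
  destruct (Nat.eqb_spec (N + j) x); [lia|].
  destruct (Nat.leb_spec N (N + j)); destruct (Nat.ltb_spec (N + j) (N + K)); simpl; try lia.
  rewrite E; f_equal; lia.
Qed.

Lemma closeN_elim {L : lang} (M : structure L) n : forall (q : form L) v,
  sat M v (closeN n q) -> sat M v q.
Proof.
  induction n as [|n IH]; intros q v H; simpl in *; auto.
  apply IH; apply NNPP; intro Hn; apply H; exists (v n).
  replace (update v n (v n)) with v; auto.
  apply functional_extensionality; intro y; unfold update; destruct (Nat.eqb_spec y n); subst; auto.
Qed.

Lemma closeN_intro {L : lang} (M : structure L) n : forall (q : form L),
  (forall u, sat M u q) -> forall v, sat M v (closeN n q).
Proof.
  induction n as [|n IH]; intros q H v; simpl; auto.
  intros [a Ha]; apply Ha; apply IH; auto.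
Qed.

Lemma E_free {L : lang} N k : forall (r : form L) y,
  ffree y (Ek N k r) -> ffree y r /\ ~ (N <= y < N + k).
Proof.
  induction k as [|k IH]; intros r y H; simpl in *.
  - split; auto; lia.
  - destruct (IH _ _ H) as [[H1 H2] H3]; split; auto; lia.
Qed.

Lemma D_free {L : lang} x N k y : ffree y (@Dj L x N k) -> y = x \/ N <= y < N + k.
Proof.
  induction k as [|k IH]; simpl; [tauto|].
  intros [H|[H|H]]; [destruct (IH H); [auto|right; lia]| auto | right; lia].
Qed.

Lemma small_free {L : lang} x N k (q : form L) y : ffree y (small x N k q) -> ffree y q.
Proof.
  unfold small; intro H; apply E_free in H; destruct H as [H Hr]; simpl in H.
  destruct H as [Hxy [H|H]]; auto.
  apply D_free in H; destruct H; [congruence| lia].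
Qed.

Lemma closeN_free {L : lang} n : forall (q : form L) y, ffree y (closeN n q) -> ffree y q /\ n <= y.
Proof.
  induction n as [|n IH]; intros q y H; simpl in *; [split; auto; lia|].
  destruct H as [Hn H]; destruct (IH _ _ H); split; auto; lia.
Qed.

Section Tr.
Variables (L : lang) (F R : Type) (af : F -> nat) (ar : R -> nat).
Lemma tr_D x N k : tr_form L F R af ar (@Dj L x N k) = Dj x N k.
Proof. induction k; simpl; [reflexivity|]. rewrite IHk; reflexivity. Qed.
Lemma tr_E N k : forall q, tr_form L F R af ar (Ek N k q) = Ek N k (tr_form L F R af ar q).
Proof. induction k; intros q; simpl; [reflexivity|]. rewrite IHk; reflexivity. Qed.
Lemma tr_small x N k q : tr_form L F R af ar (small x N k q) = small x N k (tr_form L F R af ar q).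
Proof. unfold small; rewrite tr_E; simpl; rewrite tr_D; reflexivity. Qed.
Lemma tr_closeN n : forall q, tr_form L F R af ar (closeN n q) = closeN n (tr_form L F R af ar q).
Proof. induction n; intros q; simpl; [reflexivity|]. rewrite IHn; reflexivity. Qed.
End Tr.

Definition smallset {A : Type} (K : nat) (S : A -> Prop) :=
  exists l : list A, length l <= K /\ forall a, S a -> In a l.

Lemma smallset_mono {A : Type} K K' (S S' : A -> Prop) :
  K <= K' -> (forall a, S a -> S' a) -> smallset K S' -> smallset K' S.
Proof. intros HK HS [l [Hl H]]; exists l; split; [lia| auto]. Qed.

Lemma fin0 (n : nat) (i : Fin.t n) : n = 0 -> False.
Proof. destruct i; discriminate. Qed.

Lemma bc_small {L : lang} (M : structure L) x (psi : form L) : boolcomb psi ->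
  exists K, forall u, smallset K (fun a => sat M (update u x a) psi) \/
                      smallset K (fun a => ~ sat M (update u x a) psi).
Proof.
  induction 1 as [| y z | y c t Hc | p Hp IH | p q Hp IHp Hq IHq].
  - exists 0; intro u; left; exists []; simpl; split; auto.
  - exists 1; intro u; simpl; unfold update.
    destruct (Nat.eqb_spec y x); destruct (Nat.eqb_spec z x).
    + right; exists []; simpl; split; auto.
    + left; exists [u z]; simpl; split; auto.
    + left; exists [u y]; simpl; split; auto.
    + destruct (classic (u y = u z)).
      * right; exists []; simpl; split; auto.
      * left; exists []; simpl; split; auto.
  - exists 1; intro u.
    set (cv := teval M u (tapp c t)).
    assert (Hcv : forall a, teval M (update u x a) (tapp c t) = cv).
    { intro a; unfold cv; simpl; f_equal; apply functional_extensionality; intro i.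
      exfalso; exact (fin0 _ i Hc). }
    assert (Hsat : forall a, sat M (update u x a) (feq (tvar y) (tapp c t)) <-> update u x a y = cv).
    { intro a; change (teval M (update u x a) (tvar y) = teval M (update u x a) (tapp c t) <-> update u x a y = cv).
      rewrite Hcv; simpl; tauto. }
    destruct (Nat.eqb_spec y x).
    + left; exists [cv]; simpl; split; auto.
      intros a Ha; apply Hsat in Ha; unfold update in Ha; subst y; rewrite Nat.eqb_refl in Ha; auto.
    + destruct (classic (u y = cv)).
      * right; exists []; simpl; split; auto; intros a Ha; apply Ha, Hsat.
        unfold update; destruct (Nat.eqb_spec y x); [congruence| auto].
      * left; exists []; simpl; split; auto; intros a Ha; apply Hsat in Ha.
        unfold update in Ha; destruct (Nat.eqb_spec y x); [congruence| auto].
  - destruct IH as [K HK]; exists K; intro u; simpl; destruct (HK u) as [H|H].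
    + right; eapply smallset_mono; [| |exact H]; auto; intros a Ha; apply NNPP; auto.
    + left; auto.
  - destruct IHp as [K1 H1]; destruct IHq as [K2 H2]; exists (K1 + K2); intro u; simpl.
    destruct (H1 u) as [A|A].
    + left; eapply smallset_mono; [| |exact A]; [lia| tauto].
    + destruct (H2 u) as [B|B].
      * left; eapply smallset_mono; [| |exact B]; [lia| tauto].
      * right; destruct A as [l1 [Hl1 A]]; destruct B as [l2 [Hl2 B]].
        exists (l1 ++ l2); split; [rewrite length_app; lia|].
        intros a Ha; apply in_or_app.
        destruct (classic (sat M (update u x a) p)); [right; apply B; tauto| left; auto].
Qed.

Lemma ov_coinc {L : lang} (M : structure L) (q : form L) x N K u f a :
  x < N -> (forall y, ffree y q -> y < N) ->
  (sat M (update (ov u N K f) x a) q <-> sat M (update u x a) q).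
Proof.
  intros Hx Hq; apply sat_coinc; intros y Hy; specialize (Hq y Hy).
  unfold update, ov; destruct (Nat.eqb y x); auto.
  destruct (Nat.leb_spec N y); simpl; auto; lia.
Qed.

Theorem corollary3p8 (L : lang) (T : theory L) :
  complete_theory T -> constantizable_theory T -> strongly_minimal T.
Proof.
  intros [Hsent [_ [Hclosed Hcomp]]] Hconst M HM p x v.
  destruct (Hconst p) as (F & R & af & ar & T' & HT' & Hext & psi & Hbc & Hfree & Hequiv).
  destruct HT' as [_ [[M'' HM''] _]].
  destruct (fbound p) as [N0 HN0].
  set (N := S (N0 + x)).
  assert (HxN : x < N) by (unfold N; lia).
  assert (HpN : forall y, ffree y p -> y < N) by (intros y Hy; specialize (HN0 y Hy); unfold N; lia).
  assert (HpsiN : forall y, ffree y psi -> y < N) by auto.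
  destruct (bc_small M'' x psi Hbc) as [K HK].
  set (body := f_or (small x N K p) (small x N K (fneg p))).
  set (sigma := closeN N body).
  assert (Hs : sentence sigma).
  { intros y Hy; apply closeN_free in Hy; destruct Hy as [Hy HNy].
    unfold body in Hy; simpl in Hy.
    destruct Hy as [Hy|Hy]; apply small_free in Hy; simpl in Hy; apply HpN in Hy; lia. }
  assert (HTs : T sigma).
  { destruct (Hcomp sigma Hs) as [H|H]; auto; exfalso.
    apply Hext in H. pose proof HM'' as [[m] HM'].
    apply (HM' _ H (fun _ => m)).
    change (sat M'' (fun _ => m) (tr_form L F R af ar (closeN N body))).
    rewrite tr_closeN; apply closeN_intro; intro u.
    unfold body; change (sat M'' u (f_or (tr_form L F R af ar (small x N K p))
                                         (tr_form L F R af ar (small x N K (fneg p))))).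
    rewrite sat_or, !tr_small.
    destruct (HK u) as [[l [Hl Hin]]|[l [Hl Hin]]].
    - left; apply (small_intro _ _ _ _ _ _ (fun j => nth j l (u 0))); auto.
      intros a Ha; apply (proj1 (Hequiv M'' HM'' _)) in Ha; apply (ov_coinc M'' psi x N K u (fun j => nth j l (u 0)) a HxN HpsiN) in Ha.
      apply Hin in Ha; apply In_nth with (d := u 0) in Ha; destruct Ha as [j [Hj E]].
      exists j; split; [lia| auto].
    - right; apply (small_intro _ _ _ _ _ _ (fun j => nth j l (u 0))); auto.
      intros a Ha; simpl in Ha.
      assert (Hb : ~ sat M'' (update u x a) psi).
      { rewrite <- (ov_coinc M'' psi x N K u (fun j => nth j l (u 0)) a HxN HpsiN); rewrite <- (Hequiv M'' HM''); exact Ha. }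
      apply Hin in Hb; apply In_nth with (d := u 0) in Hb; destruct Hb as [j [Hj E]].
      exists j; split; [lia| auto]. }
  destruct HM as [_ HM]; specialize (HM _ HTs v).
  apply closeN_elim in HM; unfold body in HM; rewrite sat_or in HM.
  destruct HM as [H|H]; apply small_elim in H; auto; destruct H as [f Hf].
  - left; exists (map f (seq 0 K)); intros a Ha.
    rewrite <- (ov_coinc M p x N K v f a HxN HpN) in Ha.
    destruct (Hf a Ha) as [j [Hj E]]; subst; apply in_map; apply in_seq; lia.
  - right; exists (map f (seq 0 K)); intros a Ha.
    assert (Hb : sat M (update (ov v N K f) x a) (fneg p)).
    { simpl; rewrite (ov_coinc M p x N K v f a HxN HpN); exact Ha. }
    destruct (Hf a Hb) as [j [Hj E]]; subst; apply in_map; apply in_seq; lia.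
Qed.
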